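(* Let $\Theta\in\mathbb{R}^{n\times p}$ be a matrix each of whose rows is monotone (either nondecreasing or nonincreasing). Let $\Theta'=\Theta(I_p-\frac1p ee^\top)$ have singular value decomposition $\Theta'=\sum_{i=1}^r\lambda_i u_iv_i^\top$ with $\lambda_1\ge\cdots\ge\lambda_r>0$, and assume condition (A) holds. Then the leading right singular vector $v_1=(v_{11},\dots,v_{1p})^\top$ satisfies $\sum_{j=1}^p v_{1j}=0$ and $v_{11}\le v_{12}\le\cdots\le v_{1p}$. Moreover, the signs of the components of the leading left singular vector $u_1=(u_{11},\dots,u_{1n})^\top$ indicate the direction of monotonicity of the rows: $u_{1i}\ge 0$ whenever the $i$-th row of $\Theta'$ (equivalently of $\Theta$) is nondecreasing, and $u_{1i}\le0$ whenever it is nonincreasing.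
   Context: $e=(1,\dots,1)^\top\in\mathbb{R}^p$. Condition (A): the largest singular value $\lambda_1$ of $\Theta'$ has multiplicity one, and the first nonzero component of $v_1$ is negative (this fixes the signs of the pair $(u_1,v_1)$). *)

(* Defs.v *)
(* Real numbers are modelled by an arbitrary real closed field
   (R : rcfType), which includes the real numbers. *)
From HB Require Import structures.
From mathcomp Require Import all_boot all_order all_algebra.
Set Implicit Arguments. Unset Strict Implicit. Unset Printing Implicit Defensive.
Import Order.TTheory GRing.Theory Num.Theory.
Local Open Scope ring_scope.

Definition row_nondecr (R : realDomainType) (n p : nat) (A : 'M[R]_(n, p)) (i : 'I_n) :=
  forall j1 j2 : 'I_p, (j1 <= j2)%N -> A i j1 <= A i j2.
Definition row_nonincr (R : realDomainType) (n p : nat) (A : 'M[R]_(n, p)) (i : 'I_n) :=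
  forall j1 j2 : 'I_p, (j1 <= j2)%N -> A i j2 <= A i j1.

Definition center (R : fieldType) (n p : nat) (A : 'M[R]_(n, p)) : 'M[R]_(n, p) :=
  A *m (1%:M - p%:R^-1 *: (const_mx 1 : 'M[R]_(p, 1)) *m (const_mx 1 : 'M[R]_(1, p))).

Definition is_svd (R : realFieldType) (n p r : nat) (A : 'M[R]_(n, p))
    (lam : 'I_r -> R) (U : 'M[R]_(n, r)) (V : 'M[R]_(p, r)) : Prop :=
  [/\ U^T *m U = 1%:M,
      V^T *m V = 1%:M,
      (forall i j : 'I_r, (i <= j)%N -> lam j <= lam i),
      (forall i : 'I_r, 0 < lam i)
    & A = \sum_(i < r) lam i *: (col i U *m (col i V)^T)].

(* Condition (A): lam_1 has multiplicity one, and the first nonzero component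
   of v_1 is negative.  Here r = r'.+1 so that lam_1 = lam ord0. *)
Definition condA (R : realFieldType) (p r' : nat) (lam : 'I_r'.+1 -> R)
    (V : 'M[R]_(p, r'.+1)) : Prop :=
  (forall i : 'I_r'.+1, i != ord0 -> lam i < lam ord0) /\
  (exists k : 'I_p, (forall j : 'I_p, (j < k)%N -> V j ord0 = 0) /\ V k ord0 < 0).

(* Main.v *)
Require Import Defs.
From HB Require Import structures.
From mathcomp Require Import all_boot all_order all_algebra.
From mathcomp.algebra_tactics Require Import ring lra.
Import Order.TTheory GRing.Theory Num.Theory.
Local Open Scope ring_scope.

Section Helpers.
Local Set Implicit Arguments. Local Unset Strict Implicit.
Variable R : rcfType.

Lemma center_entry n p (A : 'M[R]_(n, p)) a b :
  center A a b = A a b - p%:R^-1 * \sum_(c < p) A a c.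
Proof.
rewrite /center !mxE.
under eq_bigr => c _ do rewrite !mxE big_ord1 !mxE mulr1.
rewrite (bigD1 b) //= eqxx mulrBr mulr1.
rewrite (eq_bigr (fun c => A a c * (0 - p%:R^-1))); last first.
  by move=> c hc; rewrite (negbTE hc) mulr1.
rewrite -big_distrl /= [in RHS](bigD1 b) //=.
ring.
Qed.

Lemma center_rowsum n p (A : 'M[R]_(n, p)) a : (0 < p)%N ->
  \sum_(b < p) center A a b = 0.
Proof.
move=> hp; under eq_bigr do rewrite center_entry.
rewrite sumrB sumr_const card_ord -[X in _ - X]mulr_natl.
have hp' : p%:R != 0 :> R by rewrite pnatr_eq0 -lt0n.
by field.
Qed.

Lemma svd_entry n p r (A : 'M[R]_(n, p)) lam (U : 'M[R]_(n, r)) V a b :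
  A = \sum_(i < r) lam i *: (col i U *m (col i V)^T) ->
  A a b = \sum_(k < r) lam k * U a k * V b k.
Proof.
move=> ->; rewrite summxE; apply: eq_bigr => k _.
by rewrite !mxE big_ord1 !mxE mulrA.
Qed.

Lemma orth_entry m r (V : 'M[R]_(m, r)) : V^T *m V = 1%:M ->
  forall k l, \sum_(b < m) V b k * V b l = (k == l)%:R.
Proof.
move=> h k l; have := congr1 (fun M : 'M_r => M k l) h; rewrite !mxE => <-.
by apply: eq_bigr => b _; rewrite mxE.
Qed.

Lemma sum_delta r (c : 'I_r -> R) l :
  \sum_(k < r) c k * (k == l)%:R = c l.
Proof.
rewrite (bigD1 l) //= eqxx mulr1 big1 ?addr0 // => k /negbTE ->; by rewrite mulr0.
Qed.

Lemma sq_sum_expand m r (c : 'I_r -> R) (f : 'I_r -> 'I_m -> R) :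
  \sum_(b < m) (\sum_(k < r) c k * f k b) ^+ 2 =
  \sum_(k < r) \sum_(l < r) c k * c l * \sum_(b < m) f k b * f l b.
Proof.
transitivity (\sum_(b < m) \sum_(k < r) \sum_(l < r) c k * c l * (f k b * f l b)).
  apply: eq_bigr => b _; rewrite expr2 big_distrl /=; apply: eq_bigr => k _.
  rewrite big_distrr /=; apply: eq_bigr => l _; ring.
rewrite exchange_big /=; apply: eq_bigr => k _.
rewrite exchange_big /=; apply: eq_bigr => l _.
by rewrite big_distrr.
Qed.

Lemma orth_norm m r (V : 'M[R]_(m, r)) (c : 'I_r -> R) :
  (forall k l, \sum_(b < m) V b k * V b l = (k == l)%:R) ->
  \sum_(b < m) (\sum_(k < r) c k * V b k) ^+ 2 = \sum_(k < r) c k ^+ 2.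
Proof.
move=> h; rewrite (sq_sum_expand c (fun k b => V b k)).
apply: eq_bigr => k _; under eq_bigr do rewrite h.
under eq_bigr do rewrite eq_sym.
by rewrite (sum_delta (fun l => c k * c l) k) expr2.
Qed.
Lemma cross_sum m r (V : 'M[R]_(m, r)) (c : 'I_r -> R) (y : 'I_m -> R) :
  \sum_(b < m) y b * (\sum_(k < r) c k * V b k) =
  \sum_(k < r) c k * \sum_(b < m) V b k * y b.
Proof.
under eq_bigr do rewrite big_distrr /=.
rewrite exchange_big /=; apply: eq_bigr => k _; rewrite big_distrr /=.
by apply: eq_bigr => b _; ring.
Qed.

Lemma bessel m r (V : 'M[R]_(m, r)) (y : 'I_m -> R) :
  (forall k l, \sum_(b < m) V b k * V b l = (k == l)%:R) ->
  \sum_(k < r) (\sum_(b < m) V b k * y b) ^+ 2 <= \sum_(b < m) y b ^+ 2.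
Proof.
move=> h.
set a := fun k => \sum_(b < m) V b k * y b.
have H0 : 0 <= \sum_(b < m) (y b - \sum_(k < r) a k * V b k) ^+ 2.
  by apply: sumr_ge0 => b _; apply: sqr_ge0.
have E : \sum_(b < m) (y b - \sum_(k < r) a k * V b k) ^+ 2 =
   \sum_(b < m) y b ^+ 2 - 2 * (\sum_(b < m) y b * (\sum_(k < r) a k * V b k))
   + \sum_(b < m) (\sum_(k < r) a k * V b k) ^+ 2.
  rewrite mulr_sumr -sumrB -big_split /=; apply: eq_bigr => b _; ring.
rewrite E orth_norm // cross_sum in H0.
have -> : \sum_(k < r) (\sum_(b < m) V b k * y b) ^+ 2 = \sum_(k < r) a k * a k.
  by apply: eq_bigr => k _; rewrite expr2.
have E2 : \sum_(k < r) a k ^+ 2 = \sum_(k < r) a k * a k.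
  by apply: eq_bigr => k _; rewrite expr2.
rewrite E2 in H0.
lra.
Qed.

Lemma chebyshev p (f g : 'I_p -> R) : (0 < p)%N ->
  (forall j1 j2 : 'I_p, (j1 <= j2)%N -> f j1 <= f j2) ->
  (forall j1 j2 : 'I_p, (j1 <= j2)%N -> g j1 <= g j2) ->
  \sum_(b < p) g b = 0 -> 0 <= \sum_(b < p) f b * g b.
Proof.
move=> hp hf hg hs.
have H0 : 0 <= \sum_(b < p) \sum_(c < p) (f b - f c) * (g b - g c).
  apply: sumr_ge0 => b _; apply: sumr_ge0 => c _.
  case: (leqP b c) => hbc.
    by rewrite -mulrNN !opprB mulr_ge0 // subr_ge0; [apply: hf|apply: hg].
  by rewrite mulr_ge0 // subr_ge0; [apply: hf|apply: hg]; apply: ltnW.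
have E : \sum_(b < p) \sum_(c < p) (f b - f c) * (g b - g c) =
   (p%:R * \sum_(b < p) f b * g b) *+ 2.
  have E1 : forall b c, (f b - f c) * (g b - g c) =
      (f b * g b + f c * g c) - (f b * g c + f c * g b) by move=> b c; ring.
  under eq_bigr do under eq_bigr do rewrite E1.
  under eq_bigr do rewrite sumrB !big_split /=.
  rewrite sumrB !big_split /=.
  have T1 : \sum_(i < p) \sum_(j < p) f i * g i = (\sum_(b < p) f b * g b) *+ p.
    by rewrite -sumrMnl; apply: eq_bigr => i _; rewrite sumr_const card_ord.
  have T2 : \sum_(i < p) \sum_(j < p) f j * g j = (\sum_(b < p) f b * g b) *+ p.
    by rewrite sumr_const card_ord.
  have T3 : \sum_(i < p) \sum_(j < p) f i * g j = 0.
    by rewrite big1 // => i _; rewrite -big_distrr /= hs mulr0.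
  have T4 : \sum_(i < p) \sum_(j < p) f j * g i = 0.
    under eq_bigr do rewrite -big_distrl /=.
    by rewrite -big_distrr /= hs mulr0.
  rewrite T1 T2 T3 T4 addr0 subr0 -mulr2n mulr_natl.
  by [].
rewrite E in H0.
have hp' : 0 < p%:R :> R by rewrite ltr0n.
rewrite pmulrn_lge0 // pmulr_rge0 // in H0.
Qed.
Lemma abs_sq (x : R) : `|x| * `|x| = x * x.
Proof. by rewrite -normrM -expr2 ger0_norm ?sqr_ge0. Qed.

Lemma noninc_sum_neg p (v : 'I_p -> R) (k : 'I_p) :
  (forall j1 j2 : 'I_p, (j1 <= j2)%N -> v j2 <= v j1) ->
  (forall j : 'I_p, (j < k)%N -> v j = 0) -> v k < 0 ->
  \sum_(j < p) v j < 0.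
Proof.
move=> hv h0 hk; rewrite (bigD1 k) //=.
have : \sum_(j < p | j != k) v j <= 0.
  apply: sumr_le0 => j _; case: (ltnP j k) => hjk; first by rewrite h0.
  by apply: le_trans (ltW hk); apply: hv.
lra.
Qed.
End Helpers.

Theorem proposition1 (R : rcfType) (n p r' : nat) (Theta : 'M[R]_(n, p))
  (lam : 'I_r'.+1 -> R) (U : 'M[R]_(n, r'.+1)) (V : 'M[R]_(p, r'.+1)) :
  (forall i : 'I_n, row_nondecr Theta i \/ row_nonincr Theta i) ->
  is_svd (center Theta) lam U V ->
  condA lam V ->
  [/\ \sum_(j < p) V j ord0 = 0,
      (forall j1 j2 : 'I_p, (j1 <= j2)%N -> V j1 ord0 <= V j2 ord0),
      (forall i : 'I_n, row_nondecr Theta i -> 0 <= U i ord0)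
    & (forall i : 'I_n, row_nonincr Theta i -> U i ord0 <= 0)].
Proof.
move=> Hmono [HU HV Hord Hpos HC] [Hsimple [k [Hk0 Hk]]].
have hp : (0 < p)%N by apply: leq_ltn_trans (leq0n k) (ltn_ord k).
set C := center Theta in HC.
have Centry : forall a b, C a b = \sum_(i < r'.+1) lam i * U a i * V b i.
  by move=> a b; apply: svd_entry.
have oU := orth_entry HU.
have oV := orth_entry HV.
set l := lam ord0.
have lpos : 0 < l := Hpos ord0.
have Cv : forall a, \sum_(b < p) C a b * V b ord0 = l * U a ord0.
  move=> a; under eq_bigr do rewrite Centry big_distrl /=.
  rewrite exchange_big /=.
  under eq_bigr => i _.
    rewrite (eq_bigr (fun b => lam i * U a i * (V b i * V b ord0))); last first.
      by move=> b _; rewrite mulrA.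
    rewrite -big_distrr /= oV.
  over.
  by rewrite (sum_delta (fun i => lam i * U a i)).
have Ctu : forall b, \sum_(a < n) C a b * U a ord0 = l * V b ord0.
  move=> b; under eq_bigr do rewrite Centry big_distrl /=.
  rewrite exchange_big /=.
  under eq_bigr => i _.
    rewrite (eq_bigr (fun a => lam i * V b i * (U a i * U a ord0))); last first.
      by move=> a _; ring.
    rewrite -big_distrr /= oU.
  over.
  by rewrite (sum_delta (fun i => lam i * V b i)).
have Crow : forall a, \sum_(b < p) C a b = 0 by move=> a; apply: center_rowsum.
have Vsum : \sum_(j < p) V j ord0 = 0.
  have : l * \sum_(j < p) V j ord0 = 0.
    rewrite big_distrr /=.
    under eq_bigr do rewrite -Ctu.
    rewrite exchange_big /= big1 // => a _.
    by rewrite -big_distrl /= Crow mul0r.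
  by move/eqP; rewrite mulf_eq0 (gt_eqF lpos) /= => /eqP.
pose nd a := [forall j1 : 'I_p, forall j2 : 'I_p,
                 (j1 <= j2)%N ==> (Theta a j1 <= Theta a j2)].
have ndP : forall a, reflect (row_nondecr Theta a) (nd a).
  move=> a; apply: (iffP forallP) => [h j1 j2 hj | h j1].
    by have /forallP/(_ j2)/implyP := h j1; apply.
  by apply/forallP => j2; apply/implyP; apply: h.
pose s a : R := if nd a then 1 else -1.
have s2 : forall a, s a * s a = 1.
  by move=> a; rewrite /s; case: (nd a); rewrite ?mulr1 ?mulrNN ?mulr1.
have sn : forall a, `|s a| = 1.
  by move=> a; rewrite /s; case: (nd a); rewrite ?normr1 ?normrN1.
pose w a b := s a * C a b.
have wmono : forall a (j1 j2 : 'I_p), (j1 <= j2)%N -> w a j1 <= w a j2.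
  move=> a j1 j2 hj; rewrite /w /s /C !center_entry.
  case: (ndP a) => h.
    by have := h j1 j2 hj; lra.
  have [h'|h'] := Hmono a; first by case: (h h').
  by have := h' j1 j2 hj; lra.
have wsum : forall a, \sum_(b < p) w a b = 0.
  by move=> a; rewrite -big_distrr /= Crow mulr0.
have Gpos : forall a a', 0 <= \sum_(b < p) w a b * w a' b.
  by move=> a a'; apply: chebyshev => //; apply: wmono.
pose x a := U a ord0.
pose y a := s a * `|x a|.
pose z b := \sum_(a < n) `|x a| * w a b.
have zeq : forall b, \sum_(a < n) C a b * y a = z b.
  by move=> b; apply: eq_bigr => a _; rewrite /y /w; ring.
have zmono : forall j1 j2 : 'I_p, (j1 <= j2)%N -> z j1 <= z j2.
  move=> j1 j2 hj; apply: ler_sum => a _.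
  by apply: ler_wpM2l; [apply: normr_ge0 | apply: wmono].
have Ineq1 : l ^+ 2 <= \sum_(b < p) z b ^+ 2.
  have E1 : \sum_(b < p) (\sum_(a < n) (x a * s a) * w a b) ^+ 2 = l ^+ 2.
    transitivity (\sum_(b < p) (l * V b ord0) ^+ 2).
      apply: eq_bigr => b _; rewrite -Ctu; congr (_ ^+ 2).
      apply: eq_bigr => a _; rewrite /w.
      transitivity (x a * (s a * s a) * C a b); first by ring.
      by rewrite s2 mulr1 mulrC.
    under eq_bigr do rewrite exprMn.
    rewrite -big_distrr /=.
    under eq_bigr do rewrite expr2.
    by rewrite oV eqxx mulr1.
  rewrite -E1 (sq_sum_expand (fun a => x a * s a) w) (sq_sum_expand (fun a => `|x a|) w).
  apply: ler_sum => a _; apply: ler_sum => a' _.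
  apply: ler_wpM2r; first exact: Gpos.
  apply: le_trans (ler_norm _) _.
  by rewrite !normrM !sn !mulr1.
pose ak k := \sum_(a < n) U a k * y a.
have zsvd : forall b, z b = \sum_(i < r'.+1) (lam i * ak i) * V b i.
  move=> b; rewrite -zeq.
  under eq_bigr do rewrite Centry big_distrl /=.
  rewrite exchange_big /=; apply: eq_bigr => i _.
  rewrite /ak big_distrr big_distrl /=; apply: eq_bigr => a _; ring.
have Ez : \sum_(b < p) z b ^+ 2 = \sum_(i < r'.+1) (lam i * ak i) ^+ 2.
  under eq_bigr do rewrite zsvd.
  by apply: orth_norm.
have Bes : \sum_(i < r'.+1) ak i ^+ 2 <= 1.
  apply: le_trans (bessel y oU) _.
  rewrite (eq_bigr (fun a => U a ord0 * U a ord0)) ?oU ?eqxx //.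
  by move=> a _; rewrite /y exprMn !expr2 s2 mul1r abs_sq.
pose a0 := ak ord0.
rewrite Ez (bigD1 ord0) //= -/l -/a0 in Ineq1.
rewrite (bigD1 ord0) //= -/a0 in Bes.
set S1 := \sum_(i < r'.+1 | i != ord0) (lam i * ak i) ^+ 2 in Ineq1.
set S2 := \sum_(i < r'.+1 | i != ord0) ak i ^+ 2 in Bes.
have Dnn : forall i : 'I_r'.+1, i != ord0 ->
    0 <= l ^+ 2 * ak i ^+ 2 - (lam i * ak i) ^+ 2.
  move=> i hi; rewrite exprMn -mulrBl; apply: mulr_ge0; last exact: sqr_ge0.
  have h1 : lam i < l := Hsimple i hi; have h2 := Hpos i; rewrite subr_ge0 !expr2; apply: ler_pM; rewrite ?ltW //; exact: (lt_trans h2 h1).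
have Deq : \sum_(i < r'.+1 | i != ord0) (l ^+ 2 * ak i ^+ 2 - (lam i * ak i) ^+ 2)
    = l ^+ 2 * S2 - S1 by rewrite sumrB mulr_sumr.
have Dle : l ^+ 2 * S2 - S1 <= 0.
  have := ler_wpM2l (sqr_ge0 l) Bes.
  move: Ineq1; rewrite exprMn mulr1 mulrDr; lra.
have D0 : l ^+ 2 * S2 - S1 = 0.
  apply/eqP; rewrite eq_le Dle /= -Deq; exact: sumr_ge0.
have akz : forall i : 'I_r'.+1, i != ord0 -> ak i = 0.
  move=> i hi; have := psumr_eq0P Dnn; rewrite Deq => /(_ D0 i hi).
  rewrite exprMn -mulrBl => /eqP; rewrite mulf_eq0 => /orP [|].
    have h1 : lam i < l := Hsimple i hi; have h2 := Hpos i.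
    move=> /eqP h3; exfalso.
    have : lam i ^+ 2 < l ^+ 2 by rewrite !expr2 ltr_pM // ltW.
    lra.
  by rewrite sqrf_eq0 => /eqP.
have S10 : S1 = 0.
  by rewrite /S1 big1 // => i hi; rewrite akz // mulr0 expr0n.
have a0sq : 1 <= a0 ^+ 2.
  have hl2 : 0 < l ^+ 2 by apply: exprn_gt0.
  rewrite -(ler_pM2l hl2) mulr1 -exprMn.
  by move: Ineq1; rewrite S10 addr0.
have zV : forall b, z b = l * a0 * V b ord0.
  move=> b; rewrite zsvd (bigD1 ord0) //= big1 ?addr0 //.
  by move=> i hi; rewrite akz // mulr0 mul0r.
pose T a := x a * y a.
have a0T : a0 = \sum_(a < n) T a by [].
have xx1 : \sum_(a < n) x a * x a = 1 by rewrite oU eqxx.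
have Tb : forall a, `|T a| = x a * x a.
  by move=> a; rewrite /T /y !normrM sn mul1r normr_id abs_sq.
have Tle : forall a, T a <= x a * x a by move=> a; rewrite -Tb ler_norm.
have Tge : forall a, - (x a * x a) <= T a.
  by move=> a; rewrite -Tb lerNl -normrN ler_norm.
have a0le : a0 <= 1 by rewrite a0T -xx1; apply: ler_sum => a _.
have a0ge : -1 <= a0.
  by rewrite a0T -xx1 -sumrN; apply: ler_sum => a _.
have a0pm : a0 = 1 \/ a0 = -1.
  have h1 : 0 <= (1 - a0) * (1 + a0) by apply: mulr_ge0; lra.
  have h2 : (1 - a0) * (1 + a0) <= 0.
    move: a0sq; rewrite expr2; move=> h; have : (1 - a0) * (1 + a0) = 1 - a0 * a0 by ring.
    move=> ->; lra.
  have /eqP : (1 - a0) * (1 + a0) = 0 by apply/eqP; rewrite eq_le h1 h2.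
  rewrite mulf_eq0 => /orP [] /eqP h; [left|right]; lra.
have hl2 : 0 < l := lpos.
case: a0pm => ha0; last first.
  exfalso.
  have Vni : forall j1 j2 : 'I_p, (j1 <= j2)%N -> V j2 ord0 <= V j1 ord0.
    move=> j1 j2 hj; have := zmono j1 j2 hj; rewrite !zV ha0.
    rewrite !mulrN1 !mulNr lerN2 (ler_pM2l hl2) //.
  have := noninc_sum_neg Vni Hk0 Hk; rewrite Vsum ltxx //.
have Vnd : forall j1 j2 : 'I_p, (j1 <= j2)%N -> V j1 ord0 <= V j2 ord0.
  by move=> j1 j2 hj; have := zmono j1 j2 hj; rewrite !zV ha0 mulr1 (ler_pM2l hl2).
have Teq : forall a, T a = x a * x a.
  move=> a; have hnn : forall a, 0 <= x a * x a - T a by move=> a'; rewrite subr_ge0.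
  have hs : \sum_(a < n) (x a * x a - T a) = 0 by rewrite sumrB xx1 -a0T ha0 subrr.
  have := @psumr_eq0P _ _ predT _ (fun a _ => hnn a) hs a isT.
  by move/eqP; rewrite subr_eq0 => /eqP.
split => //.
  move=> a ha; have hnd : nd a by apply/ndP.
  have := Teq a; rewrite /T /y /s hnd mul1r.
  case: (ltrP (U a ord0) 0) => hx //; rewrite /x ltr0_norm // => h.
  have : U a ord0 * U a ord0 = 0 by lra.
  by move/eqP; rewrite mulf_eq0 orbb => /eqP h0; rewrite h0 ltxx in hx.
move=> a ha; case E: (nd a); last first.
  have := Teq a; rewrite /T /y /s E.
  case: (lerP (U a ord0) 0) => hx //; rewrite /x gtr0_norm // => h.
  have : U a ord0 * U a ord0 = 0 by lra.
  by move/eqP; rewrite mulf_eq0 orbb => /eqP h0; rewrite h0 ltxx in hx.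
have hnd : row_nondecr Theta a by apply/ndP.
have hch : 0 <= \sum_(b < p) C a b * (- C a b).
  apply: chebyshev => //.
  - by move=> j1 j2 hj; rewrite /C !center_entry; have := hnd j1 j2 hj; lra.
  - by move=> j1 j2 hj; rewrite /C !center_entry; have := ha j1 j2 hj; lra.
  - by rewrite sumrN Crow oppr0.
have hs : \sum_(b < p) C a b * C a b = 0.
  apply/eqP; rewrite eq_le; apply/andP; split.
    have E3 : \sum_(b < p) C a b * (- C a b) = - \sum_(b < p) C a b * C a b.
      by rewrite -sumrN; apply: eq_bigr => b _; rewrite mulrN.
    by move: hch; rewrite E3 oppr_ge0.
  by apply: sumr_ge0 => b _; rewrite -expr2 sqr_ge0.
have C0 : forall b, C a b = 0.
  move=> b; have := @psumr_eq0P _ _ predT _ (fun b _ => (sqr_ge0 (C a b) : 0 <= C a b * C a b)) hs b isT.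
  by move/eqP; rewrite mulf_eq0 orbb => /eqP.
have : l * U a ord0 = 0.
  by rewrite -Cv big1 // => b _; rewrite C0 mul0r.
by move/eqP; rewrite mulf_eq0 (gt_eqF lpos) /= => /eqP ->.
Qed.
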